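(* Let $G$ be a $\sigma$-compact locally compact Abelian group, $C>0$, and $\{P_\varepsilon\}_{0<\varepsilon<C}$ a family of subsets of $G$ satisfying: (A1) $0\in P_\varepsilon=-P_\varepsilon$ for all $0<\varepsilon<C$; (A2) each $P_\varepsilon$ is locally finite; (A3) $P_\varepsilon+P_{\varepsilon'}\subset P_{\varepsilon+\varepsilon'}$ whenever $\varepsilon+\varepsilon'<C$; (A4) each $P_\varepsilon$ is relatively dense. Then for every $0<\varepsilon<C$ the set $P_\varepsilon+\bigcap_{0<\varepsilon'<C}P_{\varepsilon'}$ is a model set. In particular, if $\bigcap_{0<\varepsilon'<C}P_{\varepsilon'}=\{0\}$, then every $P_\varepsilon$, $0<\varepsilon<C$, is a model set.
   Context: Locally finite: finite intersection with every compact set. Relatively dense: $A+K=G$ for some compact $K$. A cut and project scheme $(G\times H,\widetilde L)$: $H$ a locally compact Abelian group, $\widetilde L\subset G\times H$ a lattice (discrete, cocompact subgroup) such that $\pi_1|_{\widetilde L}$ is injective and $\pi_2(\widetilde L)$ is dense in $H$; for $x\in\pi_1(\widetilde L)$, $x^\star:=\pi_2((\pi_1|_{\widetilde L})^{-1}(x))$. For $W\subset H$, $\Lambda(W):=\{x\in\pi_1(\widetilde L): x^\star\in W\}$. A model set is a set of the form $\Lambda(W)$ for some cut and project scheme and some precompact $W\subset H$ with nonempty interior. *)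

(* Defs.v *)
From Stdlib Require Import Reals List.
Open Scope R_scope.

Definition set (T : Type) := T -> Prop.
Definition subset {T} (A B : set T) := forall x, A x -> B x.
Definition seteq {T} (A B : set T) := forall x, A x <-> B x.

Record is_topology {T : Type} (op : set T -> Prop) : Prop := {
  top_full : op (fun _ => True);
  top_inter : forall U V, op U -> op V -> op (fun x => U x /\ V x);
  top_union : forall (I : Type) (U : I -> set T),
      (forall i, op (U i)) -> op (fun x => exists i, U i x)
}.

Definition prod_open {T S} (opT : set T -> Prop) (opS : set S -> Prop)
  (W : set (T * S)) : Prop :=
  forall p, W p -> exists U V, opT U /\ opS V /\ U (fst p) /\ V (snd p) /\
     (forall x y, U x -> V y -> W (x, y)).

Definition continuous {T S} (opT : set T -> Prop) (opS : set S -> Prop)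
  (f : T -> S) : Prop :=
  forall V, opS V -> opT (fun x => V (f x)).

Definition hausdorff {T} (op : set T -> Prop) : Prop :=
  forall x y, x <> y -> exists U V, op U /\ op V /\ U x /\ V y /\
     (forall z, U z -> V z -> False).

Definition compact {T} (op : set T -> Prop) (K : set T) : Prop :=
  forall (I : Type) (U : I -> set T), (forall i, op (U i)) ->
    subset K (fun x => exists i, U i x) ->
    exists l : list I, subset K (fun x => exists i, In i l /\ U i x).

Definition closure {T} (op : set T -> Prop) (A : set T) : set T :=
  fun x => forall U, op U -> U x -> exists y, U y /\ A y.

Definition dense {T} (op : set T -> Prop) (A : set T) : Prop :=
  forall x, closure op A x.

Definition precompact {T} (op : set T -> Prop) (A : set T) : Prop :=
  compact op (closure op A).

Definition nonempty_interior {T} (op : set T -> Prop) (A : set T) : Prop :=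
  exists U, op U /\ (exists x, U x) /\ subset U A.

Record TopAbGroup := {
  carrier :> Type;
  gzero : carrier;
  gadd : carrier -> carrier -> carrier;
  gopp : carrier -> carrier;
  gopen : set carrier -> Prop;
  gaddA : forall x y z, gadd x (gadd y z) = gadd (gadd x y) z;
  gaddC : forall x y, gadd x y = gadd y x;
  gadd0 : forall x, gadd gzero x = x;
  gaddN : forall x, gadd (gopp x) x = gzero;
  gtop : is_topology gopen;
  gadd_cont : continuous (prod_open gopen gopen) gopen
                (fun p => gadd (fst p) (snd p));
  gopp_cont : continuous gopen gopen gopp
}.
Arguments gzero {_}.
Arguments gadd {_}.
Arguments gopp {_}.
Arguments gopen {_}.

Definition locally_compact (G : TopAbGroup) : Prop :=
  forall x : G, exists U K, gopen U /\ U x /\ compact gopen K /\ subset U K.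

Definition LCA (G : TopAbGroup) : Prop :=
  hausdorff (@gopen G) /\ locally_compact G.

Definition sigma_compact (G : TopAbGroup) : Prop :=
  exists K : nat -> set G, (forall n, compact gopen (K n)) /\
    forall x, exists n, K n x.

Definition setadd {G : TopAbGroup} (A B : set G) : set G :=
  fun z => exists a b, A a /\ B b /\ z = gadd a b.

Definition locally_finite {G : TopAbGroup} (A : set G) : Prop :=
  forall K, compact gopen K ->
    exists l : list G, forall x, K x -> A x -> In x l.

Definition relatively_dense {G : TopAbGroup} (A : set G) : Prop :=
  exists K, compact gopen K /\ forall x, setadd A K x.

Definition prod_top (G H : TopAbGroup) : set (G * H) -> Prop :=
  prod_open (@gopen G) (@gopen H).

Definition padd {G H : TopAbGroup} (p q : G * H) : G * H :=
  (gadd (fst p) (fst q), gadd (snd p) (snd q)).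

Definition is_subgroup {G H : TopAbGroup} (L : set (G * H)) : Prop :=
  L (gzero, gzero) /\
  (forall p q, L p -> L q -> L (padd p q)) /\
  (forall p, L p -> L (gopp (fst p), gopp (snd p))).

Definition discrete_in {G H : TopAbGroup} (L : set (G * H)) : Prop :=
  forall p, L p -> exists W, prod_top G H W /\ W p /\
     (forall q, W q -> L q -> q = p).

Definition cocompact {G H : TopAbGroup} (L : set (G * H)) : Prop :=
  exists K, compact (prod_top G H) K /\
     forall p, exists l k, L l /\ K k /\ p = padd l k.

Definition is_lattice {G H : TopAbGroup} (L : set (G * H)) : Prop :=
  is_subgroup L /\ discrete_in L /\ cocompact L.

Definition cut_and_project_scheme (G H : TopAbGroup) (L : set (G * H)) : Prop :=
  LCA H /\ is_lattice L /\
  (forall p q, L p -> L q -> fst p = fst q -> p = q) /\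
  dense (@gopen H) (fun h => exists x, L (x, h)).

(** Lambda(W) = { x in pi1(L) : x^star in W }; since pi1 is injective on L,
    x^star is the unique h with (x,h) in L. *)
Definition window_set {G H : TopAbGroup} (L : set (G * H)) (W : set H) : set G :=
  fun x => exists h, L (x, h) /\ W h.

Definition model_set (G : TopAbGroup) (A : set G) : Prop :=
  exists (H : TopAbGroup) (L : set (G * H)) (W : set H),
    cut_and_project_scheme G H L /\ precompact (@gopen H) W /\
    nonempty_interior (@gopen H) W /\ seteq A (window_set L W).

(* Main.v *)
From Stdlib Require Import Reals Lra Lia List.
From Stdlib Require Import ClassicalEpsilon ProofIrrelevance FunctionalExtensionality PropExtensionality Classical.
Require Import Defs.
Open Scope R_scope.

Definition glb (E : R -> Prop) (m : R) : Prop :=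
  (forall x, E x -> m <= x) /\ (forall r, (forall x, E x -> r <= x) -> r <= m).

Lemma glb_exists (E : R -> Prop) : (exists x, E x) -> (exists b, forall x, E x -> b <= x) ->
  exists m, glb E m.
Proof.
  intros [x0 Hx0] [b Hb].
  destruct (completeness (fun y => E (- y))) as [l [Hl1 Hl2]].
  - exists (- b). intros y Hy. specialize (Hb _ Hy). lra.
  - exists (- x0). rewrite Ropp_involutive. exact Hx0.
  - exists (- l). split.
    + intros x Hx. assert (l >= - x) by (apply Rle_ge, Hl1; rewrite Ropp_involutive; exact Hx). lra.
    + intros r Hr. assert (l <= - r).
      { apply Hl2. intros y Hy. specialize (Hr _ Hy). lra. } lra.
Qed.

Definition Rinf (E : R -> Prop) : R :=
  match excluded_middle_informative (exists m, glb E m) with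
  | left h => proj1_sig (constructive_indefinite_description _ h)
  | right _ => 0 end.

Lemma Rinf_spec (E : R -> Prop) : (exists x, E x) -> (exists b, forall x, E x -> b <= x) ->
  glb E (Rinf E).
Proof.
  intros h1 h2. unfold Rinf. destruct excluded_middle_informative as [h|h].
  - exact (proj2_sig (constructive_indefinite_description _ h)).
  - exfalso. apply h. apply glb_exists; auto.
Qed.

Lemma Rinf_le (E : R -> Prop) x b : (forall y, E y -> b <= y) -> E x -> Rinf E <= x.
Proof. intros hb hx. apply (Rinf_spec E); eauto. Qed.

Lemma Rinf_ge (E : R -> Prop) r : (exists x, E x) -> (forall y, E y -> r <= y) -> r <= Rinf E.
Proof. intros hx hb. apply (Rinf_spec E); eauto. Qed.

Lemma Rinf_lt (E : R -> Prop) r : (exists x, E x) -> (exists b, forall y, E y -> b <= y) ->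
  Rinf E < r -> exists x, E x /\ x < r.
Proof.
  intros h1 h2 hlt. apply NNPP; intro hn.
  assert (r <= Rinf E). { apply Rinf_ge; auto. intros y Hy. apply Rnot_lt_le. intro. apply hn; eauto. }
  lra.
Qed.

Definition hp (n : nat) : R := (/2) ^ n.
Lemma hp_pos n : 0 < hp n.
Proof. unfold hp. apply pow_lt. lra. Qed.
Lemma hp_small e : 0 < e -> exists n, hp n <= e.
Proof.
  intros he. destruct (pow_lt_1_zero (/2)) with (y := e) as [N HN].
  - rewrite Rabs_pos_eq; lra.
  - exact he.
  - exists N. specialize (HN N (le_n _)). rewrite Rabs_pos_eq in HN.
    + unfold hp; lra.
    + left. apply pow_lt. lra.
Qed.
Lemma hp_S n : hp (S n) = hp n / 2.
Proof. unfold hp. simpl. field. Qed.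
Lemma hp_mono n m : (n <= m)%nat -> hp m <= hp n.
Proof.
  induction 1. lra. rewrite hp_S. pose proof (hp_pos m). lra.
Qed.
Lemma le_of_hp x y c : 0 <= c -> (forall n, x <= y + c * hp n) -> x <= y.
Proof.
  intros hc h. apply Rnot_lt_le; intro hlt.
  destruct (Rle_lt_or_eq_dec 0 c hc) as [hc'|hc'].
  - destruct (hp_small ((x - y) / (2 * c))) as [n Hn].
    + apply Rdiv_lt_0_compat; lra.
    + specialize (h n). assert (c * hp n <= c * ((x-y)/(2*c))) by (apply Rmult_le_compat_l; lra).
      assert (c * ((x - y) / (2 * c)) = (x-y)/2) by (field; lra). lra.
  - specialize (h O). subst c. lra.
Qed.

Lemma Rabs_le_inv x a : Rabs x <= a -> -a <= x <= a.
Proof. intros h. pose proof (Rle_abs x). pose proof (Rle_abs (-x)). rewrite Rabs_Ropp in H0. lra. Qed.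
Lemma set_ext {T} (A B : set T) : (forall x, A x <-> B x) -> A = B.
Proof. intros h. apply functional_extensionality; intro x. apply propositional_extensionality. apply h. Qed.

Lemma open_of_local {T} (op : set T -> Prop) (S : set T) : is_topology op ->
  (forall x, S x -> exists A, op A /\ A x /\ subset A S) -> op S.
Proof.
  intros ht h.
  pose (J := {A : set T | op A /\ subset A S}).
  assert (E : S = (fun x => exists j : J, proj1_sig j x)).
  { apply set_ext; intro x; split.
    - intro hx. destruct (h x hx) as [A [h1 [h2 h3]]]. exists (exist _ A (conj h1 h3)). exact h2.
    - intros [[A [h1 h3]] hx]. apply h3. exact hx. }
  rewrite E. apply (top_union _ ht). intros [A [h1 h3]]. exact h1.
Qed.

Lemma open_finite_inter {T J} (op : set T -> Prop) (l : list J) (f : J -> set T) :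
  is_topology op -> (forall j, In j l -> op (f j)) -> op (fun x => forall j, In j l -> f j x).
Proof.
  intros ht. induction l as [|j l IH]; intros h.
  - assert (E : (fun x : T => forall j0 : J, In j0 nil -> f j0 x) = (fun _ => True)).
    { apply set_ext; intro x; split; auto. intros _ j0 []. }
    rewrite E. apply (top_full _ ht).
  - assert (E : (fun x : T => forall j0 : J, In j0 (j :: l) -> f j0 x) =
                (fun x => f j x /\ (fun x => forall j0, In j0 l -> f j0 x) x)).
    { apply set_ext; intro x; split.
      - intros H0. split. apply H0; left; auto. intros; apply H0; right; auto.
      - intros [H1 H2] j0 [<-|Hj]; auto. }
    rewrite E. apply (top_inter _ ht). apply h; left; auto. apply IH. intros; apply h; right; auto.
Qed.

Lemma compact_prod {T S} (opT : set T -> Prop) (opS : set S -> Prop) K1 K2 :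
  is_topology opT -> compact opT K1 -> compact opS K2 ->
  compact (prod_open opT opS) (fun p => K1 (fst p) /\ K2 (snd p)).
Proof.
  intros ht hK1 hK2 I U HU Hcov.
  assert (claim : forall x, K1 x -> exists A (l : list I), opT A /\ A x /\
     forall x' y, A x' -> K2 y -> exists i, In i l /\ U i (x', y)).
  { intros x hx.
    pose (J := {i : I & {A : set T & {B : set S | opT A /\ opS B /\ A x /\
                 (forall x' y, A x' -> B y -> U i (x', y))}}}).
    pose (V := fun j : J => proj1_sig (projT2 (projT2 j))).
    destruct (hK2 J V) as [lj Hlj].
    - intros [i [A [B [h1 [h2 h0]]]]]. exact h2.
    - intros y hy. destruct (Hcov (x, y) (conj hx hy)) as [i Hi].
      destruct (HU i (x, y) Hi) as [A [B [h1 [h2 [h3 [h4 h5]]]]]].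
      exists (existT _ i (existT _ A (exist _ B (conj h1 (conj h2 (conj h3 h5)))))). exact h4.
    - exists (fun x' => forall j, In j lj -> projT1 (projT2 j) x').
      exists (map (fun j : J => projT1 j) lj). split; [|split].
      + apply open_finite_inter; auto. intros [i [A [B [h1 h0]]]] _. exact h1.
      + intros [i [A [B [h1 [h2 [h3 h0]]]]]] _. exact h3.
      + intros x' y hA hy. destruct (Hlj y hy) as [j [Hj Hv]].
        exists (projT1 j). split. apply in_map; auto.
        specialize (hA j Hj). destruct j as [i [A [B [h1 [h2 [h3 h5]]]]]]. simpl in *.
        apply h5; auto. }
  pose (J' := {A : set T & {l : list I | opT A /\
                 forall x' y, A x' -> K2 y -> exists i, In i l /\ U i (x', y)}}).
  destruct (hK1 J' (fun j => projT1 j)) as [lj Hlj].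
  - intros [A [l [h1 h0]]]. exact h1.
  - intros x hx. destruct (claim x hx) as [A [l [h1 [h2 h3]]]].
    exists (existT _ A (exist _ l (conj h1 h3))). exact h2.
  - exists (flat_map (fun j : J' => proj1_sig (projT2 j)) lj).
    intros [x y] [hx hy]. simpl in *. destruct (Hlj x hx) as [j [Hj HA]].
    destruct j as [A [l [h1 h3]]]. simpl in *.
    destruct (h3 x y HA hy) as [i [Hi HU']]. exists i. split; auto.
    apply in_flat_map. exists (existT _ A (exist _ l (conj h1 h3))). simpl. auto.
Qed.
Section GroupAlg.
Context {G : TopAbGroup}.
Implicit Types x y z : G.

Lemma gadd0r x : gadd x gzero = x.
Proof. rewrite gaddC. apply gadd0. Qed.
Lemma gaddNr x : gadd x (gopp x) = gzero.
Proof. rewrite gaddC. apply gaddN. Qed.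
Lemma gaddKl x y : gadd (gopp x) (gadd x y) = y.
Proof. rewrite gaddA, gaddN, gadd0. reflexivity. Qed.
Lemma gaddKr x y : gadd x (gadd (gopp x) y) = y.
Proof. rewrite gaddA, gaddNr, gadd0. reflexivity. Qed.
Lemma gopp_uniq x y : gadd x y = gzero -> y = gopp x.
Proof. intros h. rewrite <- (gaddKl x y), h, gadd0r. reflexivity. Qed.
Lemma goppK x : gopp (gopp x) = x.
Proof. symmetry. apply gopp_uniq. apply gaddN. Qed.
Lemma gopp0 : gopp (@gzero G) = gzero.
Proof. symmetry. apply gopp_uniq. apply gadd0. Qed.
Lemma goppD x y : gopp (gadd x y) = gadd (gopp x) (gopp y).
Proof. symmetry. apply gopp_uniq.
  rewrite <- gaddA, (gaddC _ (gopp x) (gopp y)), (gaddA _ y), gaddNr, gadd0, gaddNr. reflexivity. Qed.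
Lemma gaddAC x y z : gadd (gadd x y) z = gadd (gadd x z) y.
Proof. rewrite <- !gaddA, (gaddC _ y z). reflexivity. Qed.
Lemma gaddCA x y z : gadd x (gadd y z) = gadd y (gadd x z).
Proof. rewrite !gaddA, (gaddC _ x y). reflexivity. Qed.
Lemma gsub_eq0 x y : gadd x (gopp y) = gzero -> x = y.
Proof. intros h. rewrite <- (goppK y). apply gopp_uniq. rewrite gaddC. exact h. Qed.

Lemma gopen_transl (U : set G) c : gopen U -> gopen (fun x => U (gadd x c)).
Proof.
  intros hU. apply open_of_local. apply gtop.
  intros x hx. pose proof (gadd_cont G U hU (x, c) hx) as h.
  destruct h as [A [B [h1 [h2 [h3 [h4 h5]]]]]]. simpl in *.
  exists A. split; auto. split; auto. intros x' hx'. apply (h5 x' c hx' h4).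
Qed.
Lemma gopen_opp (U : set G) : gopen U -> gopen (fun x => U (gopp x)).
Proof. intros hU. apply (gopp_cont G U hU). Qed.
End GroupAlg.
Section GIds.
Context {G : TopAbGroup}.
Implicit Types a b c x y z w : G.
Local Notation "a - b" := (gadd a (gopp b)).
Local Notation "a + b" := (gadd a b).

Lemma I1 a b c : (a + c) - (b + c) = a - b.
Proof. rewrite goppD, <- gaddA, (gaddCA c), gaddNr, gadd0r. reflexivity. Qed.
Lemma I2 a b c : (a - b) + (b - c) = a - c.
Proof. rewrite <- gaddA, gaddKl. reflexivity. Qed.
Lemma I3 a b : gopp (a - b) = b - a.
Proof. rewrite goppD, goppK, gaddC. reflexivity. Qed.
Lemma I4 a b y z : a - b = (y - z) + ((a - y) - (b - z)).
Proof.
  rewrite I3.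
  rewrite (gaddC _ a (gopp y)), <- (gaddA _ (gopp y)), (gaddA _ (y - z)).
  rewrite (gaddC _ y (gopp z)), <- (gaddA _ (gopp z) y), gaddNr, gadd0r.
  rewrite gaddCA, gaddKl. reflexivity.
Qed.
Lemma I5 a : a - gzero = a.
Proof. rewrite gopp0, gadd0r. reflexivity. Qed.
Lemma I6 x y : x - (x - y) = y.
Proof. rewrite goppD, goppK, gaddKr. reflexivity. Qed.
Lemma I7 x y : (x - y) - gopp y = x.
Proof. rewrite goppK, <- gaddA, gaddN, gadd0r. reflexivity. Qed.
Lemma I9 a b : gopp a - gopp b = b - a.
Proof. rewrite goppK, gaddC. reflexivity. Qed.
Lemma I10 x y w : (x - y) - w = x - (y + w).
Proof. rewrite goppD, gaddA. reflexivity. Qed.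
Lemma I11 y w : (y + w) - y = w.
Proof. rewrite gaddC, gaddKl. reflexivity. Qed.
Lemma I12 x y z : (x - z) - (y - z) = x - y.
Proof. rewrite <- (I1 x y (gopp z)). reflexivity. Qed.
End GIds.

Section Main.
Variable G : TopAbGroup.
Variable C : R.
Hypothesis HC : 0 < C.
Variable P : R -> set G.
Hypothesis A1 : forall e, 0 < e < C -> P e gzero /\ (forall x, P e x <-> P e (gopp x)).
Hypothesis A3 : forall e e', 0 < e -> 0 < e' -> e + e' < C ->
          subset (setadd (P e) (P e')) (P (e + e')).

Definition nuset (x : G) : R -> Prop := fun r => (0 < r < C /\ P r x) \/ r = C.
Definition nu (x : G) : R := Rinf (nuset x).

Lemma nuset_ne x : exists r, nuset x r.
Proof. exists C. right. reflexivity. Qed.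
Lemma nuset_lb x : forall r, nuset x r -> 0 <= r.
Proof. intros r [[h _]|h]; lra. Qed.

Lemma nu_ge0 x : 0 <= nu x.
Proof. apply Rinf_ge. apply nuset_ne. apply nuset_lb. Qed.
Lemma nu_leC x : nu x <= C.
Proof. apply (Rinf_le _ _ 0). apply nuset_lb. right; reflexivity. Qed.
Lemma nu_le e x : 0 < e < C -> P e x -> nu x <= e.
Proof. intros he hp. apply (Rinf_le _ _ 0). apply nuset_lb. left; auto. Qed.

Lemma Pmono e e' x : 0 < e -> e <= e' -> e' < C -> P e x -> P e' x.
Proof.
  intros h1 h2 h3 hp. destruct (Rle_lt_or_eq_dec _ _ h2) as [hl|he]; [|subst; auto].
  replace e' with (e + (e' - e)) by ring. apply A3; try lra.
  exists x, gzero. split; auto. split. apply (proj1 (A1 (e' - e) ltac:(lra))). rewrite gadd0r. reflexivity.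
Qed.

Lemma nu_lt e x : 0 < e < C -> nu x < e -> P e x.
Proof.
  intros he hlt. destruct (Rinf_lt _ _ (nuset_ne x) (ex_intro _ 0 (nuset_lb x)) hlt) as [r [[[h1 h2]|h1] h3]].
  - apply (Pmono r); auto; lra.
  - lra.
Qed.

Lemma nu_zero : nu gzero = 0.
Proof.
  apply Rle_antisym; [|apply nu_ge0].
  apply Rnot_lt_le; intro h.
  set (m := Rmin (nu gzero) C / 2).
  assert (0 < Rmin (nu gzero) C) by (apply Rmin_glb_lt; lra).
  pose proof (Rmin_r (nu gzero) C); pose proof (Rmin_l (nu gzero) C).
  assert (hm : 0 < m < C) by (unfold m; lra).
  assert (nu gzero <= m) by (apply nu_le; auto; apply (proj1 (A1 m hm))).
  unfold m in *; lra.
Qed.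

Lemma nu_opp_le x : nu (gopp x) <= nu x.
Proof.
  apply Rinf_ge. apply nuset_ne. intros r [[h1 h2]|h1].
  - apply nu_le; auto. apply (proj1 (proj2 (A1 r h1) x)); auto.
  - subst. apply nu_leC.
Qed.
Lemma nu_opp x : nu (gopp x) = nu x.
Proof.
  apply Rle_antisym. apply nu_opp_le. rewrite <- (goppK x) at 1. apply nu_opp_le.
Qed.

Lemma nu_tri x y : nu (gadd x y) <= nu x + nu y.
Proof.
  destruct (Rle_lt_dec C (nu x + nu y)) as [h|h].
  { pose proof (nu_leC (gadd x y)); lra. }
  apply Rle_plus_epsilon. intros eps heps.
  set (d := Rmin (eps/2) ((C - nu x - nu y)/4)).
  assert (hd1 : 0 < d) by (apply Rmin_glb_lt; lra).
  assert (hd2 : d <= eps/2) by apply Rmin_l.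
  assert (hd3 : d <= (C - nu x - nu y)/4) by apply Rmin_r.
  pose proof (nu_ge0 x); pose proof (nu_ge0 y).
  assert (nu (gadd x y) <= (nu x + d) + (nu y + d)).
  { apply nu_le. lra. apply A3; try lra. exists x, y. split. apply nu_lt; lra.
    split. apply nu_lt; lra. reflexivity. }
  lra.
Qed.

Definition Iset (x : G) : Prop := forall e, 0 < e < C -> P e x.

Lemma nu_I x : Iset x -> nu x = 0.
Proof.
  intros hI. apply Rle_antisym; [|apply nu_ge0].
  apply Rnot_lt_le; intro h.
  set (m := Rmin (nu x) C / 2).
  assert (0 < Rmin (nu x) C) by (apply Rmin_glb_lt; lra).
  pose proof (Rmin_r (nu x) C); pose proof (Rmin_l (nu x) C).
  assert (nu x <= m) by (apply nu_le; [unfold m; lra| apply hI; unfold m; lra]).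
  unfold m in *; lra.
Qed.
Lemma I_nu x : nu x = 0 -> Iset x.
Proof. intros h e he. apply nu_lt; lra. Qed.


Inductive Gam : G -> Prop :=
| Gam0 : Gam gzero
| GamP : forall e x y, 0 < e < C -> P e x -> Gam y -> Gam (gadd x y).

Lemma Gam_P e x : 0 < e < C -> P e x -> Gam x.
Proof. intros he hp. rewrite <- (gadd0r x). apply (GamP e); auto. constructor. Qed.
Lemma Gam_add x y : Gam x -> Gam y -> Gam (gadd x y).
Proof. induction 1; intros hy. rewrite gadd0; auto. rewrite <- gaddA. apply (GamP e); auto. Qed.
Lemma Gam_opp x : Gam x -> Gam (gopp x).
Proof.
  induction 1. rewrite gopp0; constructor.
  rewrite goppD. apply Gam_add; auto. apply (Gam_P e); auto. apply (proj1 (proj2 (A1 e H) x)); auto.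
Qed.

Definition Gm := {x : G | Gam x}.
Definition mzero : Gm := exist _ gzero Gam0.
Definition madd (a b : Gm) : Gm := exist _ (gadd (proj1_sig a) (proj1_sig b))
   (Gam_add _ _ (proj2_sig a) (proj2_sig b)).
Definition mopp (a : Gm) : Gm := exist _ (gopp (proj1_sig a)) (Gam_opp _ (proj2_sig a)).
Definition msub (a b : Gm) : Gm := madd a (mopp b).

Lemma Gm_eq (a b : Gm) : proj1_sig a = proj1_sig b -> a = b.
Proof. destruct a as [a ha], b as [b hb]; simpl. intros ->. f_equal. apply proof_irrelevance. Qed.

Definition d (a b : Gm) : R := nu (gadd (proj1_sig a) (gopp (proj1_sig b))).

Lemma d_refl a : d a a = 0.
Proof. unfold d. rewrite gaddNr. apply nu_zero. Qed.
Lemma d_sym a b : d a b = d b a.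
Proof. unfold d. rewrite <- nu_opp, I3. reflexivity. Qed.
Lemma d_tri a b c : d a c <= d a b + d b c.
Proof. unfold d. rewrite <- (I2 (proj1_sig a) (proj1_sig b)). apply nu_tri. Qed.
Lemma d_ge0 a b : 0 <= d a b.
Proof. apply nu_ge0. Qed.
Lemma d_leC a b : d a b <= C.
Proof. apply nu_leC. Qed.
Lemma d_sub a b c : d (msub a c) (msub b c) = d a b.
Proof. unfold d, msub, madd, mopp; simpl. rewrite I12. reflexivity. Qed.
Lemma d_opp a b : d (mopp a) (mopp b) = d a b.
Proof. unfold d, mopp; simpl. rewrite I9, <- nu_opp, I3. reflexivity. Qed.
Lemma d_zero a : d a mzero = nu (proj1_sig a).
Proof. unfold d; simpl. rewrite I5. reflexivity. Qed.

Definition kat (f : Gm -> R) : Prop :=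
  (forall a b, f a <= f b + d a b) /\ (forall a b, d a b <= f a + f b) /\
  (forall eta, 0 < eta -> exists a, f a <= eta).

Lemma kat_ge0 f a : kat f -> 0 <= f a.
Proof. intros [_ [h _]]. specialize (h a a). rewrite d_refl in h. lra. Qed.
Lemma kat_abs f a b : kat f -> Rabs (f a - f b) <= d a b.
Proof. intros [h _]. pose proof (h a b); pose proof (h b a). rewrite d_sym in H0.
  apply Rabs_le; lra. Qed.

Definition Hc := {f : Gm -> R | kat f}.
Definition fn (h : Hc) : Gm -> R := proj1_sig h.
Lemma fn_kat h : kat (fn h).
Proof. exact (proj2_sig h). Qed.
Lemma fn_ge0 h a : 0 <= fn h a.
Proof. apply kat_ge0, fn_kat. Qed.
Lemma H_eq (h k : Hc) : (forall a, fn h a = fn k a) -> h = k.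
Proof.
  destruct h as [f hf], k as [g hg]; unfold fn; simpl. intros e.
  assert (f = g) by (apply functional_extensionality; auto). subst. f_equal. apply proof_irrelevance.
Qed.

Lemma kat_iota a : kat (fun x => d x a).
Proof.
  split; [|split].
  - intros x y. pose proof (d_tri x y a). lra.
  - intros x y. rewrite (d_sym y a). apply d_tri.
  - intros eta he. exists a. rewrite d_refl. lra.
Qed.
Definition iota (a : Gm) : Hc := exist _ (fun x => d x a) (kat_iota a).

Definition conv (f g : Gm -> R) (x : Gm) : R := Rinf (fun r => exists y, r = f y + g (msub x y)).

Lemma conv_le f g x y : (forall a, 0 <= f a) -> (forall a, 0 <= g a) ->
  conv f g x <= f y + g (msub x y).
Proof.
  intros hf hg. apply (Rinf_le _ _ 0).
  - intros r [z ->]. specialize (hf z); specialize (hg (msub x z)); lra.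
  - exists y; reflexivity.
Qed.
Lemma conv_ge f g x r : (forall y, r <= f y + g (msub x y)) -> r <= conv f g x.
Proof.
  intros h. apply Rinf_ge. exists (f mzero + g (msub x mzero)), mzero; reflexivity.
  intros r' [y ->]. auto.
Qed.

Lemma msub_add a b : msub (madd a b) a = b.
Proof. apply Gm_eq. simpl. rewrite (gaddC _ (proj1_sig a)), <- gaddA, gaddNr, gadd0r. reflexivity. Qed.
Lemma msub_sub x y : msub x (msub x y) = y.
Proof. apply Gm_eq. simpl. apply I6. Qed.
Lemma mopp_opp a : mopp (mopp a) = a.
Proof. apply Gm_eq. simpl. apply goppK. Qed.

Lemma kat_conv f g : kat f -> kat g -> kat (conv f g).
Proof.
  intros hf hg.
  assert (f0 : forall a, 0 <= f a) by (intros; apply kat_ge0; auto).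
  assert (g0 : forall a, 0 <= g a) by (intros; apply kat_ge0; auto).
  destruct hf as [hf1 [hf2 hf3]], hg as [hg1 [hg2 hg3]].
  split; [|split].
  - intros a b. cut (conv f g a - d a b <= conv f g b). lra.
    apply conv_ge. intros y. pose proof (conv_le f g a y f0 g0).
    pose proof (hg1 (msub a y) (msub b y)). rewrite d_sub in H0. lra.
  - intros a b. cut (d a b - conv f g b <= conv f g a). lra.
    apply conv_ge. intros y. cut (d a b - f y - g (msub a y) <= conv f g b). lra.
    apply conv_ge. intros z.
    assert (d a b <= d y z + d (msub a y) (msub b z)).
    { unfold d. simpl. rewrite (I4 (proj1_sig a) (proj1_sig b) (proj1_sig y) (proj1_sig z)). apply nu_tri. }
    pose proof (hf2 y z). pose proof (hg2 (msub a y) (msub b z)). lra.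
  - intros eta he. destruct (hf3 (eta/2)) as [a ha]. lra. destruct (hg3 (eta/2)) as [b hb]. lra.
    exists (madd a b). pose proof (conv_le f g (madd a b) a f0 g0). rewrite msub_add in H. lra.
Qed.

Definition hadd (h k : Hc) : Hc := exist _ (conv (fn h) (fn k)) (kat_conv _ _ (fn_kat h) (fn_kat k)).

Lemma kat_opp f : kat f -> kat (fun x => f (mopp x)).
Proof.
  intros [h1 [h2 h3]]. split; [|split].
  - intros a b. rewrite <- (d_opp a b). apply h1.
  - intros a b. rewrite <- (d_opp a b). apply h2.
  - intros eta he. destruct (h3 eta he) as [a ha]. exists (mopp a). rewrite mopp_opp. auto.
Qed.
Definition hopp (h : Hc) : Hc := exist _ (fun x => fn h (mopp x)) (kat_opp _ (fn_kat h)).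
Definition hzero : Hc := iota mzero.

Lemma conv_comm f g x : (forall a, 0 <= f a) -> (forall a, 0 <= g a) -> conv f g x = conv g f x.
Proof.
  intros f0 g0.
  assert (forall f g, (forall a, 0 <= f a) -> (forall a, 0 <= g a) -> conv f g x <= conv g f x).
  { clear f g f0 g0. intros f g f0 g0. apply conv_ge. intros y.
    pose proof (conv_le f g x (msub x y) f0 g0). rewrite msub_sub in H. lra. }
  apply Rle_antisym; auto.
Qed.

Lemma hadd_comm h k : hadd h k = hadd k h.
Proof. apply H_eq. intros a. simpl. apply conv_comm; apply fn_ge0. Qed.

Lemma hadd0 h : hadd hzero h = h.
Proof.
  apply H_eq. intros x. simpl. apply Rle_antisym.
  - pose proof (conv_le (fun y => d y mzero) (fn h) x mzero (fun _ => d_ge0 _ _) (fn_ge0 h)).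
    simpl in H. rewrite d_refl in H. replace (msub x mzero) with x in H. lra.
    apply Gm_eq. simpl. rewrite I5. reflexivity.
  - apply conv_ge. intros y. destruct (fn_kat h) as [h1 _]. pose proof (h1 x (msub x y)).
    replace (d x (msub x y)) with (d y mzero) in H. lra.
    rewrite d_zero. unfold d. simpl. rewrite I6. reflexivity.
Qed.

Lemma haddN h : hadd (hopp h) h = hzero.
Proof.
  apply H_eq. intros x. simpl. apply Rle_antisym.
  - apply Rle_plus_epsilon. intros eps he. destruct (fn_kat h) as [h1 [h2 h3]].
    destruct (h3 (eps/2)) as [a ha]. lra.
    pose proof (conv_le (fun y => fn h (mopp y)) (fn h) x (mopp a) (fun _ => fn_ge0 _ _) (fn_ge0 h)).
    simpl in H. rewrite mopp_opp in H.
    pose proof (h1 (msub x (mopp a)) a).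
    replace (d (msub x (mopp a)) a) with (d x mzero) in H0. lra.
    rewrite d_zero. unfold d; simpl. rewrite goppK, <- gaddA, gaddNr, gadd0r. reflexivity.
  - apply conv_ge. intros y. destruct (fn_kat h) as [h1 [h2 h3]].
    pose proof (h2 (msub x y) (mopp y)).
    replace (d (msub x y) (mopp y)) with (d x mzero) in H. lra.
    rewrite d_zero. unfold d; simpl. rewrite I7. reflexivity.
Qed.
Lemma conv_ge0 f g x : (forall a, 0 <= f a) -> (forall a, 0 <= g a) -> 0 <= conv f g x.
Proof. intros f0 g0. apply conv_ge. intros y. specialize (f0 y); specialize (g0 (msub x y)). lra. Qed.

Lemma conv_assoc f g k x : (forall a, 0 <= f a) -> (forall a, 0 <= g a) -> (forall a, 0 <= k a) ->
  conv f (conv g k) x = conv (conv f g) k x.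
Proof.
  intros f0 g0 k0.
  assert (gk0 : forall a, 0 <= conv g k a) by (intros; apply conv_ge0; auto).
  assert (fg0 : forall a, 0 <= conv f g a) by (intros; apply conv_ge0; auto).
  assert (T1 : forall y w, conv f (conv g k) x <= f y + g w + k (msub (msub x y) w)).
  { intros y w. pose proof (conv_le f (conv g k) x y f0 gk0).
    pose proof (conv_le g k (msub x y) w g0 k0). lra. }
  assert (T2 : forall r, (forall y w, r <= f y + g w + k (msub (msub x y) w)) -> r <= conv f (conv g k) x).
  { intros r h. apply conv_ge. intros y. cut (r - f y <= conv g k (msub x y)). lra.
    apply conv_ge. intros w. specialize (h y w). lra. }
  assert (R1 : forall z y, conv (conv f g) k x <= f y + g (msub z y) + k (msub x z)).
  { intros z y. pose proof (conv_le (conv f g) k x z fg0 k0).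
    pose proof (conv_le f g z y f0 g0). lra. }
  assert (R2 : forall r, (forall z y, r <= f y + g (msub z y) + k (msub x z)) -> r <= conv (conv f g) k x).
  { intros r h. apply conv_ge. intros z. cut (r - k (msub x z) <= conv f g z). lra.
    apply conv_ge. intros y. specialize (h z y). lra. }
  apply Rle_antisym.
  - apply R2. intros z y. replace (msub x z) with (msub (msub x y) (msub z y)). apply T1.
    apply Gm_eq. simpl. apply I12.
  - apply T2. intros y w. replace (msub (msub x y) w) with (msub x (madd y w)).
    pose proof (R1 (madd y w) y) as HR. rewrite msub_add in HR. exact HR.
    apply Gm_eq. simpl. rewrite I10. reflexivity.
Qed.

Lemma haddA h k l : hadd h (hadd k l) = hadd (hadd h k) l.
Proof. apply H_eq. intros x. simpl. apply conv_assoc; apply fn_ge0. Qed.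

Lemma iota_add a b : hadd (iota a) (iota b) = iota (madd a b).
Proof.
  apply H_eq. intros x. simpl. apply Rle_antisym.
  - pose proof (conv_le (fun y => d y a) (fun y => d y b) x a (fun _ => d_ge0 _ _) (fun _ => d_ge0 _ _)).
    simpl in H. rewrite d_refl in H. replace (d (msub x a) b) with (d x (madd a b)) in H. lra.
    unfold d; simpl. rewrite I10. reflexivity.
  - apply conv_ge. intros y. unfold d; simpl.
    rewrite (I4 (proj1_sig x) (gadd (proj1_sig a) (proj1_sig b)) (proj1_sig y) (proj1_sig a)).
    rewrite I11. apply nu_tri.
Qed.

Lemma iota_opp a : hopp (iota a) = iota (mopp a).
Proof.
  apply H_eq. intros x. simpl. unfold d; simpl. rewrite goppK, <- goppD, nu_opp. reflexivity.
Qed.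
Definition close (r : R) (h k : Hc) : Prop := forall a, Rabs (fn h a - fn k a) <= r.
Lemma close_sym r h k : close r h k -> close r k h.
Proof. intros H a. rewrite Rabs_minus_sym. apply H. Qed.
Lemma close_tri r s h k l : close r h k -> close s k l -> close (r + s) h l.
Proof. intros H1 H2 a. specialize (H1 a); specialize (H2 a).
  replace (fn h a - fn l a) with ((fn h a - fn k a) + (fn k a - fn l a)) by ring.
  eapply Rle_trans. apply Rabs_triang. lra. Qed.
Lemma close_refl h : close 0 h h.
Proof. intros a. rewrite Rminus_diag, Rabs_R0. lra. Qed.
Lemma close_mono r s h k : r <= s -> close r h k -> close s h k.
Proof. intros hr H a. specialize (H a). lra. Qed.

Definition Hopen (U : set Hc) : Prop := forall h, U h -> exists r, 0 < r /\ forall k, close r h k -> U k.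

Lemma Hopen_top : is_topology Hopen.
Proof.
  split.
  - intros h _. exists 1. split. lra. auto.
  - intros U V hU hV h [h1 h2]. destruct (hU h h1) as [r1 [r1p H1]]. destruct (hV h h2) as [r2 [r2p H2]].
    exists (Rmin r1 r2). split. apply Rmin_glb_lt; auto. intros k hk. split.
    apply H1. apply (close_mono (Rmin r1 r2)); [apply Rmin_l|exact hk]. apply H2. apply (close_mono (Rmin r1 r2)); [apply Rmin_r|exact hk].
  - intros I U hU h [i hi]. destruct (hU i h hi) as [r [rp H]]. exists r. split; auto. intros k hk. exists i. auto.
Qed.

Definition oball (h : Hc) (r : R) : set Hc := fun k => exists s, s < r /\ close s h k.
Lemma oball_open h r : Hopen (oball h r).
Proof.
  intros k [s [hs hk]]. exists ((r - s)/2). split. lra. intros l hl.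
  exists (s + (r - s)/2). split. lra. eapply close_tri; eauto.
Qed.
Lemma oball_center h r : 0 < r -> oball h r h.
Proof. intros hr. exists 0. split; auto. apply close_refl. Qed.

Lemma close_hadd s h h' k : close s h h' -> close s (hadd h k) (hadd h' k).
Proof.
  intros H.
  assert (forall h h', close s h h' -> forall a, fn (hadd h k) a <= fn (hadd h' k) a + s).
  { clear h h' H. intros h h' H a. simpl. cut (conv (fn h) (fn k) a - s <= conv (fn h') (fn k) a). lra.
    apply conv_ge. intros y. pose proof (conv_le (fn h) (fn k) a y (fn_ge0 h) (fn_ge0 k)).
    specialize (H y). apply Rabs_le_inv in H. lra. }
  intros a. apply Rabs_le. split.
  - pose proof (H0 h' h (close_sym _ _ _ H) a). lra.
  - pose proof (H0 h h' H a). lra.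
Qed.
Lemma close_hopp s h h' : close s h h' -> close s (hopp h) (hopp h').
Proof. intros H a. simpl. apply H. Qed.

Lemma hadd_cont : continuous (prod_open Hopen Hopen) Hopen (fun p => hadd (fst p) (snd p)).
Proof.
  intros V hV [h k] hp. simpl in hp. destruct (hV _ hp) as [r [rp Hr]].
  exists (oball h (r/2)), (oball k (r/2)). split. apply oball_open. split. apply oball_open.
  split. apply oball_center; lra. split. apply oball_center; lra.
  intros h' k' [s1 [hs1 c1]] [s2 [hs2 c2]]. simpl. apply Hr.
  apply (close_mono (s1 + s2)). lra. apply close_tri with (hadd h' k).
  apply close_hadd; auto. rewrite (hadd_comm h' k), (hadd_comm h' k'). apply close_hadd; auto.
Qed.
Lemma hopp_cont : continuous Hopen Hopen hopp.
Proof.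
  intros V hV h hh. destruct (hV _ hh) as [r [rp Hr]]. exists r. split; auto.
  intros k hk. apply Hr. apply close_hopp; auto.
Qed.

Lemma H_hausdorff : hausdorff Hopen.
Proof.
  intros h k hne.
  assert (exists a, fn h a <> fn k a).
  { apply NNPP; intro hn. apply hne. apply H_eq. intros a. apply NNPP. intro. apply hn. eauto. }
  destruct H as [a ha]. set (r := Rabs (fn h a - fn k a) / 2).
  assert (0 < Rabs (fn h a - fn k a)) by (apply Rabs_pos_lt; lra).
  exists (oball h r), (oball k r). split. apply oball_open. split. apply oball_open.
  split. apply oball_center; unfold r; lra. split. apply oball_center; unfold r; lra.
  intros z [s1 [hs1 c1]] [s2 [hs2 c2]]. specialize (c1 a); specialize (c2 a).
  pose proof (Rabs_triang (fn h a - fn z a) (fn z a - fn k a)).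
  replace (fn h a - fn z a + (fn z a - fn k a)) with (fn h a - fn k a) in H0 by ring.
  rewrite (Rabs_minus_sym (fn z a)) in H0. unfold r in *. lra.
Qed.

Definition HG : TopAbGroup := {|
  carrier := Hc; gzero := hzero; gadd := hadd; gopp := hopp; gopen := Hopen;
  gaddA := haddA; gaddC := hadd_comm; gadd0 := hadd0; gaddN := haddN;
  gtop := Hopen_top; gadd_cont := hadd_cont; gopp_cont := hopp_cont |}.
Lemma H_complete (z : nat -> Hc) : (forall n m, (n <= m)%nat -> close (hp n) (z n) (z m)) ->
  exists y, forall n, close (hp n) (z n) y.
Proof.
  intros hz.
  set (lf := fun a => Rinf (fun r => exists m, r = fn (z m) a + hp m)).
  assert (lb : forall a r, (exists m, r = fn (z m) a + hp m) -> 0 <= r).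
  { intros a r [m ->]. pose proof (fn_ge0 (z m) a); pose proof (hp_pos m); lra. }
  assert (up : forall a n, lf a <= fn (z n) a + hp n).
  { intros a n. apply (Rinf_le _ _ 0). apply lb. eauto. }
  assert (lo : forall a n, fn (z n) a - hp n <= lf a).
  { intros a n. apply Rinf_ge. exists (fn (z O) a + hp O), O. reflexivity.
    intros r [m ->]. destruct (Nat.le_ge_cases n m) as [hnm|hnm].
    - specialize (hz n m hnm a). apply Rabs_le_inv in hz. pose proof (hp_pos m). lra.
    - specialize (hz m n hnm a). apply Rabs_le_inv in hz. pose proof (hp_pos n). lra. }
  assert (K : kat lf).
  { destruct (fn_kat (z O)) as [_ [_ _]]. split; [|split].
    - intros a b. apply (le_of_hp _ _ 2). lra. intros n.
      destruct (fn_kat (z n)) as [k1 _]. specialize (k1 a b).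
      pose proof (up a n); pose proof (lo b n). lra.
    - intros a b. apply (le_of_hp _ _ 2). lra. intros n.
      destruct (fn_kat (z n)) as [_ [k2 _]]. specialize (k2 a b).
      pose proof (lo a n); pose proof (lo b n). lra.
    - intros eta he. destruct (hp_small (eta/2)) as [n hn]. lra.
      destruct (fn_kat (z n)) as [_ [_ k3]]. destruct (k3 (eta/2)) as [a ha]. lra.
      exists a. pose proof (up a n). lra. }
  exists (exist _ lf K). intros n a. unfold fn at 2. simpl.
  apply Rabs_le. pose proof (up a n); pose proof (lo a n). split; lra.
Qed.

Definition cover_by {I} (U : I -> set Hc) (l : list I) (S : set Hc) : Prop :=
  subset S (fun x => exists i, In i l /\ U i x).

Lemma H_compact (K : set Hc) :
  (forall delta, 0 < delta -> exists cs : list Hc, forall x, K x -> exists c, In c cs /\ close delta c x) ->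
  (forall y, (forall eps, 0 < eps -> exists z, K z /\ close eps z y) -> K y) ->
  compact Hopen K.
Proof.
  intros TB LC I U HU Hcov. apply NNPP; intro Hno.
  set (bad := fun S : set Hc => ~ exists l, cover_by U l S).
  assert (split : forall n S, subset S K -> bad S ->
     exists c, bad (fun x => S x /\ close (hp n) c x)).
  { intros n S hSK hS. destruct (TB (hp n) (hp_pos n)) as [cs Hcs].
    apply NNPP; intro hn.
    assert (forall cs', (forall c, In c cs' -> ~ bad (fun x => S x /\ close (hp n) c x)) ->
               exists l, cover_by U l (fun x => S x /\ exists c, In c cs' /\ close (hp n) c x)).
    { induction cs' as [|c cs' IH]; intros hc.
      - exists nil. intros x [_ [c [[] _]]].
      - destruct IH as [l2 Hl2]. intros; apply hc; right; auto.
        assert (hc1 := hc c (or_introl eq_refl)). unfold bad in hc1. apply NNPP in hc1.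
        destruct hc1 as [l1 Hl1].
        exists (l1 ++ l2). intros x [hx [c' [[<-|hin] hcl]]].
        + destruct (Hl1 x (conj hx hcl)) as [i [hi hu]]. exists i. split; auto. apply in_or_app; auto.
        + destruct (Hl2 x (conj hx (ex_intro _ c' (conj hin hcl)))) as [i [hi hu]].
          exists i. split; auto. apply in_or_app; auto. }
    destruct (H cs) as [l Hl].
    - intros c _ hb. apply hn. eauto.
    - apply hS. exists l. intros x hx. apply Hl. split; auto. }
  assert (ex_step : forall n S, exists S', subset S K -> bad S ->
      bad S' /\ subset S' S /\ exists c, forall x, S' x -> close (hp n) c x).
  { intros n S. destruct (classic (subset S K /\ bad S)) as [[h1 h2]|h].
    - destruct (split n S h1 h2) as [c hc]. exists (fun x => S x /\ close (hp n) c x).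
      intros _ _. split; auto. split. intros x [hx _]; auto. exists c. intros x [_ hx]; auto.
    - exists S. intros h1 h2. exfalso; auto. }
  set (step := fun n S => proj1_sig (constructive_indefinite_description _ (ex_step n S))).
  assert (step_spec : forall n S, subset S K -> bad S -> bad (step n S) /\ subset (step n S) S /\
            exists c, forall x, step n S x -> close (hp n) c x).
  { intros n S. exact (proj2_sig (constructive_indefinite_description _ (ex_step n S))). }
  set (cell := fix cell n := match n with O => K | S m => step (S m) (cell m) end).
  assert (inv : forall n, subset (cell n) K /\ bad (cell n)).
  { induction n as [|n [IH1 IH2]].
    - split. intros x hx; exact hx. exact Hno.
    - simpl. destruct (step_spec (S n) (cell n) IH1 IH2) as [h1 [h2 _]]. split; auto.
      intros x hx. apply IH1, h2, hx. }
  assert (ball : forall n, exists c, forall x, cell (S n) x -> close (hp (S n)) c x).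
  { intros n. destruct (inv n) as [h1 h2]. apply (step_spec (S n) (cell n) h1 h2). }
  assert (mono : forall n m, (n <= m)%nat -> subset (cell m) (cell n)).
  { induction 1. intros x hx; auto. intros x hx. apply IHle.
    destruct (inv m) as [h1 h2]. apply (step_spec (S m) (cell m) h1 h2). exact hx. }
  assert (nonempty : forall n, exists x, cell n x).
  { intros n. apply NNPP; intro hn. apply (proj2 (inv n)). exists nil. intros x hx. exfalso. eauto. }
  set (pt := fun n => proj1_sig (constructive_indefinite_description _ (nonempty n))).
  assert (pt_spec : forall n, cell n (pt n)).
  { intros n. exact (proj2_sig (constructive_indefinite_description _ (nonempty n))). }
  assert (Hz : forall n m, (n <= m)%nat -> close (hp n) (pt (S n)) (pt (S m))).
  { intros n m hnm. destruct (ball n) as [c hc].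
    assert (e : hp n = hp (S n) + hp (S n)) by (rewrite hp_S; field).
    rewrite e. apply close_tri with c. apply close_sym, hc, pt_spec.
    apply hc. apply (mono (S n) (S m)). lia. apply pt_spec. }
  destruct (H_complete (fun n => pt (S n)) Hz) as [y Hy].
  assert (Ky : K y).
  { apply LC. intros eps he. destruct (hp_small eps he) as [n hn]. exists (pt (S n)). split.
    apply (proj1 (inv (S n))), pt_spec. apply (close_mono (hp n)); auto. }
  destruct (Hcov y Ky) as [i hi]. destruct (HU i y hi) as [r [rp Hr]].
  destruct (hp_small (r/2)) as [n hn]. lra.
  apply (proj2 (inv (S n))). exists (i :: nil). intros x hx. exists i. split. left; auto.
  apply Hr. destruct (ball n) as [c hc].
  apply (close_mono (hp n + (hp (S n) + hp (S n)))). rewrite hp_S. lra.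
  apply close_tri with (pt (S n)). apply close_sym, Hy.
  apply close_tri with c. apply close_sym, hc, pt_spec. apply hc, hx.
Qed.
Hypothesis A2 : forall e, 0 < e < C -> locally_finite (P e).
Hypothesis A4 : forall e, 0 < e < C -> relatively_dense (P e).
Hypothesis HLCA : LCA G.

Lemma close_iota a b : close (d a b) (iota a) (iota b).
Proof.
  intros x. simpl. apply Rabs_le. pose proof (d_tri x a b). pose proof (d_tri x b a).
  rewrite (d_sym b a) in H0. split; lra.
Qed.
Lemma approx h a : close (fn h a) h (iota a).
Proof.
  intros x. simpl. destruct (fn_kat h) as [k1 [k2 _]]. pose proof (k1 x a). pose proof (k2 x a).
  apply Rabs_le. split; lra.
Qed.
Lemma close_iota_d r a b : close r (iota a) (iota b) -> d b a <= r.
Proof.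
  intros H. specialize (H b). simpl in H. rewrite d_refl, Rminus_0_r in H.
  pose proof (d_ge0 b a). rewrite Rabs_pos_eq in H; auto.
Qed.

Definition cen (g : G) : Hc :=
  match excluded_middle_informative (Gam g) with
  | left pf => iota (exist _ g pf) | right _ => hzero end.
Lemma cen_spec g (pf : Gam g) : cen g = iota (exist _ g pf).
Proof.
  unfold cen. destruct excluded_middle_informative as [pf'|n].
  - f_equal. apply Gm_eq. reflexivity.
  - contradiction.
Qed.

Definition cball (c : Hc) (R0 : R) : set Hc := fun k => close R0 c k.

Lemma TB_ball c R0 : 0 < R0 < C -> forall delta, 0 < delta ->
  exists cs : list Hc, forall x, cball c R0 x -> exists c', In c' cs /\ close delta c' x.
Proof.
  intros hR delta hd.
  set (eta := Rmin (delta/2) ((C - R0)/8)).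
  assert (he1 : 0 < eta) by (apply Rmin_glb_lt; lra).
  assert (he2 : eta <= delta/2) by apply Rmin_l.
  assert (he3 : eta <= (C - R0)/8) by apply Rmin_r.
  destruct (fn_kat c) as [_ [kc2 kc3]].
  destruct (kc3 eta he1) as [a ha].
  set (s := R0 + 3 * eta).
  destruct (A4 eta ltac:(lra)) as [Kg [hKg1 hKg2]].
  destruct (A2 (s + eta) ltac:(unfold s; lra) Kg hKg1) as [l hl].
  exists (map (fun k => cen (gadd (proj1_sig a) k)) l).
  intros psi hpsi. destruct (fn_kat psi) as [_ [_ kp3]].
  destruct (kp3 eta he1) as [b hb].
  assert (hdb : d b a <= R0 + 2 * eta).
  { pose proof (kc2 b a). specialize (hpsi b). apply Rabs_le_inv in hpsi. lra. }
  assert (hPs : P s (gadd (proj1_sig b) (gopp (proj1_sig a)))).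
  { apply nu_lt. unfold s; lra. unfold d in hdb. unfold s; lra. }
  destruct (hKg2 (gadd (proj1_sig b) (gopp (proj1_sig a)))) as [p [k [hp [hk hpk]]]].
  assert (hPk : P (s + eta) k).
  { apply A3; try (unfold s; lra). exists (gadd (proj1_sig b) (gopp (proj1_sig a))), (gopp p).
    split; auto. split. apply (proj1 (proj2 (A1 eta ltac:(lra)) p)); auto.
    rewrite hpk, gaddAC, gaddNr, gadd0. reflexivity. }
  assert (hin : In k l) by (apply hl; auto).
  assert (hGk : Gam (gadd (proj1_sig a) k)).
  { apply Gam_add. apply (proj2_sig a). apply (Gam_P (s + eta)); auto. unfold s; lra. }
  exists (iota (exist _ _ hGk)). split.
  - rewrite <- cen_spec. apply (in_map (fun k => cen (gadd (proj1_sig a) k))). auto.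
  - apply (close_mono (eta + eta)). lra.
    apply close_tri with (iota b).
    + eapply close_mono; [|apply close_iota].
      rewrite d_sym. unfold d; simpl. rewrite <- I10, hpk, <- gaddA, gaddNr, gadd0r. apply nu_le. lra. auto.
    + apply close_sym. apply (close_mono (fn psi b)); auto. apply approx.
Qed.

Lemma LC_ball c R0 : forall y, (forall eps, 0 < eps -> exists z, cball c R0 z /\ close eps z y) -> cball c R0 y.
Proof.
  intros y H a. apply Rle_plus_epsilon. intros eps he. destruct (H eps he) as [z [hz hzy]].
  pose proof (close_tri _ _ _ _ _ hz hzy a). auto.
Qed.

Lemma cball_compact c R0 : 0 < R0 < C -> compact Hopen (cball c R0).
Proof. intros hR. apply H_compact. apply TB_ball; auto. apply LC_ball. Qed.

Lemma H_LCA : LCA HG.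
Proof.
  split. apply H_hausdorff.
  intros h. exists (oball h (C/2)), (cball h (C/2)). split. apply oball_open. split.
  apply oball_center; lra. split. apply cball_compact; lra.
  intros k [s [hs hk]]. apply (close_mono s); auto; lra.
Qed.
Definition Lat : set (G * HG) := fun p => exists a : Gm, fst p = proj1_sig a /\ snd p = iota a.

Lemma Lat_subgroup : is_subgroup Lat.
Proof.
  split; [|split].
  - exists mzero. split; reflexivity.
  - intros [x h] [y k] [a [ha1 ha2]] [b [hb1 hb2]]. simpl in *. subst.
    exists (madd a b). simpl. split. reflexivity. apply iota_add.
  - intros [x h] [a [ha1 ha2]]. simpl in *. subst. exists (mopp a). split. reflexivity. apply iota_opp.
Qed.

Lemma Lat_discrete : discrete_in Lat.
Proof.
  intros [x h] [a [ha1 ha2]]. simpl in ha1, ha2. subst.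
  destruct HLCA as [Hhd Hlc].
  destruct (Hlc gzero) as [U0 [K0 [hU0 [hU00 [hK0 hUK]]]]].
  destruct (A2 (C/2) ltac:(lra) K0 hK0) as [l hl].
  assert (exO : forall q : G, exists O : set G, gopen O /\ O gzero /\ (q <> gzero -> ~ O q)).
  { intros q. destruct (classic (q = gzero)) as [e|ne].
    - exists (fun _ => True). split. apply (top_full _ (gtop G)). split; auto.
    - destruct (Hhd gzero q (not_eq_sym ne)) as [O [V [h1 [h2 [h3 [h4 h5]]]]]].
      exists O. split; auto. split; auto. intros _ hO. apply (h5 q); auto. }
  set (Of := fun q => proj1_sig (constructive_indefinite_description _ (exO q))).
  assert (Of_spec : forall q, gopen (Of q) /\ Of q gzero /\ (q <> gzero -> ~ Of q q)).
  { intros q. exact (proj2_sig (constructive_indefinite_description _ (exO q))). }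
  set (V0 := fun y => U0 y /\ (fun y => forall q, In q l -> Of q y) y).
  assert (hV0 : gopen V0).
  { apply (top_inter _ (gtop G)); auto. apply open_finite_inter. apply gtop.
    intros q _. apply Of_spec. }
  set (Vx := fun y => V0 (gadd y (gopp (proj1_sig a)))).
  assert (hVx : gopen Vx) by (apply gopen_transl; auto).
  exists (fun q => Vx (fst q) /\ oball (iota a) (C/2) (snd q)). split; [|split].
  - intros [y k] [h1 h2]. exists Vx, (oball (iota a) (C/2)).
    split; [auto|split; [apply oball_open|split; [auto|split; [auto|]]]]. intros; split; auto.
  - simpl. split. unfold Vx, V0. rewrite gaddNr. split; auto. intros q _. apply Of_spec.
    apply oball_center. lra.
  - intros [y k] [h1 [s [hs hk]]] [b [hb1 hb2]]. simpl in *. subst.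
    apply close_iota_d in hk.
    assert (hP : P (C/2) (gadd (proj1_sig b) (gopp (proj1_sig a)))).
    { apply nu_lt. lra. unfold d in hk. lra. }
    destruct h1 as [hU hO].
    assert (hin : In (gadd (proj1_sig b) (gopp (proj1_sig a))) l) by (apply hl; auto).
    specialize (hO _ hin).
    assert (e : gadd (proj1_sig b) (gopp (proj1_sig a)) = gzero).
    { apply NNPP; intro ne. apply (proj2 (proj2 (Of_spec _)) ne hO). }
    apply gsub_eq0 in e. assert (b = a) by (apply Gm_eq; auto). subst. reflexivity.
Qed.

Lemma iota_inv c : hadd (iota c) (hopp (iota c)) = hzero.
Proof. rewrite hadd_comm. apply haddN. Qed.

Lemma Lat_cocompact : cocompact Lat.
Proof.
  destruct (A4 (C/4) ltac:(lra)) as [Kg [hKg1 hKg2]].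
  exists (fun q => Kg (fst q) /\ cball hzero (C/2) (snd q)). split.
  - apply compact_prod. apply gtop. auto. apply cball_compact. lra.
  - intros [g h]. destruct (fn_kat h) as [_ [_ k3]]. destruct (k3 (C/4) ltac:(lra)) as [gam hgam].
    destruct (hKg2 (gadd g (gopp (proj1_sig gam)))) as [p [k [hp [hk hpk]]]].
    set (ph := exist Gam p (Gam_P (C/4) p ltac:(lra) hp) : Gm).
    set (c := madd gam ph).
    exists (proj1_sig c, iota c), (k, hadd h (hopp (iota c))). split; [|split].
    + exists c. split; reflexivity.
    + simpl. split; auto. unfold cball. rewrite <- (iota_inv c).
      apply close_hadd. apply (close_mono (fn h gam + C/4)). lra.
      apply close_sym. apply close_tri with (iota gam). apply approx.
      eapply close_mono; [|apply close_iota]. unfold d. simpl.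
      rewrite goppD, gaddA, gaddNr, gadd0, nu_opp. apply nu_le. lra. auto.
    + unfold padd. simpl. f_equal.
      * rewrite <- gaddA, <- hpk, gaddCA, gaddNr, gadd0r. reflexivity.
      * rewrite (hadd_comm h), haddA, iota_inv, hadd0. reflexivity.
Qed.

Lemma Lat_cps : cut_and_project_scheme G HG Lat.
Proof.
  split. apply H_LCA. split. split. apply Lat_subgroup. split. apply Lat_discrete. apply Lat_cocompact.
  split.
  - intros [x h] [y k] [a [ha1 ha2]] [b [hb1 hb2]] e. simpl in *. subst.
    assert (a = b) by (apply Gm_eq; auto). subst. reflexivity.
  - intros h U hU hh. destruct (hU h hh) as [r [rp Hr]]. destruct (fn_kat h) as [_ [_ k3]].
    destruct (k3 r rp) as [a ha]. exists (iota a). split.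
    apply Hr. apply (close_mono (fn h a)); auto. apply approx.
    exists (proj1_sig a). exists a. split; reflexivity.
Qed.

Section Window.
Variable e : R.
Hypothesis He : 0 < e < C.

Definition Win : set HG := fun k => oball hzero e k \/ exists p : Gm, P e (proj1_sig p) /\ k = iota p.

Lemma Win_ball : subset Win (cball hzero e).
Proof.
  intros k [[s [hs hk]]|[p [hp ->]]].
  - apply (close_mono s); auto; lra.
  - eapply close_mono; [|apply close_iota]. rewrite d_sym, d_zero. apply nu_le; auto.
Qed.

Lemma Win_closure_ball : subset (closure Hopen Win) (cball hzero e).
Proof.
  intros y hy. apply LC_ball. intros eps he.
  destruct (hy (oball y eps) (oball_open y eps) (oball_center y eps he)) as [w [[s [hs hw]] hW]].
  exists w. split. apply Win_ball; auto. apply close_sym. apply (close_mono s); auto; lra.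
Qed.

Lemma Win_precompact : precompact Hopen Win.
Proof.
  apply H_compact.
  - intros delta hd. destruct (TB_ball hzero e He delta hd) as [cs Hcs]. exists cs.
    intros x hx. apply Hcs. apply Win_closure_ball; auto.
  - intros y H U hU hUy. destruct (hU y hUy) as [r [rp Hr]].
    destruct (H (r/2) ltac:(lra)) as [z [hz hzy]].
    destruct (hz (oball z (r/2)) (oball_open z (r/2)) (oball_center z (r/2) ltac:(lra))) as [w [[s [hs hw]] hW]].
    exists w. split; auto. apply Hr. apply (close_mono (r/2 + s)). lra.
    apply close_tri with z. apply close_sym; auto. auto.
Qed.

Lemma Win_interior : nonempty_interior Hopen Win.
Proof.
  exists (oball hzero e). split. apply oball_open. split. exists hzero. apply oball_center; lra.
  intros k hk. left; auto.
Qed.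

Lemma Win_window : seteq (setadd (P e) (Iset)) (window_set Lat Win).
Proof.
  intros x. split.
  - intros [p [i [hp [hi ->]]]].
    assert (hGp : Gam p) by (apply (Gam_P e); auto).
    assert (hGi : Gam i) by (apply (Gam_P e); auto).
    set (m := exist Gam (gadd p i) (Gam_add _ _ hGp hGi) : Gm).
    exists (iota m). split. exists m. split; reflexivity.
    right. exists (exist Gam p hGp). split; auto. apply H_eq. intros y. simpl. unfold d. simpl.
    pose proof (nu_I i hi) as hi0. assert (hi1 : nu (gopp i) = 0) by (rewrite nu_opp; auto).
    apply Rle_antisym.
    + rewrite <- I10. pose proof (nu_tri (gadd (proj1_sig y) (gopp p)) (gopp i)). lra.
    + pose proof (nu_tri (gadd (proj1_sig y) (gopp (gadd p i))) i).
      assert (E : gadd (gadd (proj1_sig y) (gopp (gadd p i))) i = gadd (proj1_sig y) (gopp p)).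
      { rewrite <- I10, <- gaddA, gaddN, gadd0r. reflexivity. }
      rewrite E in H. lra.
  - intros [h [[m [hm1 hm2]] hW]]. simpl in hm1, hm2. subst.
    destruct hW as [[s [hs hk]]|[p [hp hpe]]].
    + specialize (hk m). simpl in hk. rewrite d_refl, Rminus_0_r, d_zero in hk.
      rewrite Rabs_pos_eq in hk by apply nu_ge0.
      exists (proj1_sig m), gzero. split. apply nu_lt; auto; lra. split.
      intros e' he'. apply (proj1 (A1 e' he')). rewrite gadd0r. reflexivity.
    + assert (hz : d p m = 0).
      { pose proof (f_equal (fun k => fn k p) hpe). simpl in H. rewrite d_refl in H. auto. }
      exists (proj1_sig p), (gadd (proj1_sig m) (gopp (proj1_sig p))). split; auto. split.
      * apply I_nu. unfold d in hz. rewrite <- nu_opp, I3. auto.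
      * rewrite gaddCA, gaddNr, gadd0r. reflexivity.
Qed.

Lemma model_main : model_set G (setadd (P e) Iset).
Proof.
  exists HG, Lat, Win. split. apply Lat_cps. split. apply Win_precompact. split. apply Win_interior.
  apply Win_window.
Qed.
End Window.
End Main.

Lemma model_set_ext (G : TopAbGroup) (A B : set G) : seteq A B -> model_set G B -> model_set G A.
Proof.
  intros hAB [H [L [W [h1 [h2 [h3 h4]]]]]]. exists H, L, W. split; auto. split; auto. split; auto.
  intros x. rewrite (hAB x). apply h4.
Qed.

Theorem corollary2p10 (G : TopAbGroup) (HG : LCA G) (Hsig : sigma_compact G)
  (C : R) (HC : 0 < C) (P : R -> set G)
  (A1 : forall e, 0 < e < C -> P e gzero /\ (forall x, P e x <-> P e (gopp x)))
  (A2 : forall e, 0 < e < C -> locally_finite (P e))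
  (A3 : forall e e', 0 < e -> 0 < e' -> e + e' < C ->
          subset (setadd (P e) (P e')) (P (e + e')))
  (A4 : forall e, 0 < e < C -> relatively_dense (P e)) :
  (forall e, 0 < e < C ->
     model_set G (setadd (P e) (fun x => forall e', 0 < e' < C -> P e' x))) /\
  ((forall x, (forall e', 0 < e' < C -> P e' x) <-> x = gzero) ->
     forall e, 0 < e < C -> model_set G (P e)).
Proof.
  assert (M : forall e, 0 < e < C ->
     model_set G (setadd (P e) (fun x => forall e', 0 < e' < C -> P e' x))).
  { intros e he. exact (model_main G C HC P A1 A3 A2 A4 HG e he). }
  split; auto.
  intros hI e he. apply (model_set_ext _ _ _) with (2 := M e he). intros x. split.
  - intros hx. exists x, gzero. split; auto. split. apply hI. reflexivity. rewrite gadd0r. reflexivity.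
  - intros [p [i [hp [hi ->]]]]. apply hI in hi. subst. rewrite gadd0r. exact hp.
Qed.
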